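(* Let $M\ge1$, let $(\tau,R)$ be an $M$-layer medium, let $\mathsf{p}\in\mathsf{S}_M$, and set $(k,b)=(\kappa(\mathsf{p}),\beta(\mathsf{p}))$. Then \[ w(\mathsf{p})=(-R)^{\tilde{k}-b}R^{k-b}T^{2b}. \]
   Context: Fix depths $z_{-1}<z_0<\cdots<z_M$ and reals $R=(R_0,\ldots,R_M)$ with $-1<R_n<1$ (the travel times $\tau$ play no role); $T_n=\sqrt{1-R_n^2}$, $T=(T_0,\ldots,T_M)$. A (reflection) scattering sequence is a finite sequence $\mathsf{p}=(\mathsf{p}_0,\ldots,\mathsf{p}_L)$ with $L\geq 2$, $\mathsf{p}_0=\mathsf{p}_L=z_{-1}$, $\mathsf{p}_i\in\{z_0,\ldots,z_M\}$ for $1\le i\le L-1$, and for every $0\le i\le L-1$ there is $-1\le j\le M-1$ with $\{\mathsf{p}_i,\mathsf{p}_{i+1}\}=\{z_j,z_{j+1}\}$; $\mathsf{S}_M$ is the set of these. The weight is $w(\mathsf{p})=\prod_{i=1}^{L-1}w_i$ where, if $\mathsf{p}_i=z_j$: $w_i=R_j$ if $\mathsf{p}_{i-1}=\mathsf{p}_{i+1}=z_{j-1}$; $w_i=-R_j$ if $\mathsf{p}_{i-1}=\mathsf{p}_{i+1}=z_{j+1}$; $w_i=T_j$ otherwise. For $0\le n\le M$, $k_n$ is the number of maximal runs of consecutive indices $i$ with $\mathsf{p}_i\in\{z_n,\ldots,z_M\}$, and $b_n$ the number of those runs of length at least 2; $\kappa(\mathsf{p})=(k_0,\ldots,k_M)$,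 $\beta(\mathsf{p})=(b_0,\ldots,b_M)$. Notation: $\tilde{k}=(k_1,\ldots,k_M,0)$; vector arithmetic entrywise; $s^d=\prod_{n=0}^M s_n^{d_n}$ with $0^0=1$. *)

(* Defs.v *)
From mathcomp Require Import all_boot all_order all_algebra.
Set Implicit Arguments. Unset Strict Implicit. Unset Printing Implicit Defensive.
Import Order.TTheory GRing.Theory Num.Theory.
Local Open Scope ring_scope.

(* Encoding of depths: the depth z_j (-1 <= j <= M) is encoded by the
   natural number j+1.  So 0 encodes z_{-1} and n.+1 encodes z_n.
   Since z_{-1} < z_0 < ... < z_M, this encoding is a bijection and
   {p_i, p_{i+1}} = {z_j, z_{j+1}} iff the codes are adjacent integers. *)

Definition scattering_seq (M : nat) (p : seq nat) : Prop :=
  [/\ (2 < size p)%N,                          (* L >= 2, L = size p - 1 *)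
      nth 0%N p 0 = 0%N,
      nth 0%N p (size p).-1 = 0%N,
      (forall i, (0 < i < (size p).-1)%N ->
         (1 <= nth 0%N p i <= M.+1)%N)
    & (forall i, (i < (size p).-1)%N ->
         (nth 0%N p i.+1 == (nth 0%N p i).+1) ||
         (nth 0%N p i == (nth 0%N p i.+1).+1))].

Section Weights.
Variable F : rcfType.

Definition Tcoef (R : nat -> F) (j : nat) : F := Num.sqrt (1 - R j ^+ 2).

Definition wloc (R : nat -> F) (p : seq nat) (i : nat) : F :=
  let x := nth 0%N p i in
  let y := nth 0%N p i.-1 in
  let z := nth 0%N p i.+1 in
  let j := x.-1 in
  if (y == x.-1) && (z == x.-1) then R j
  else if (y == x.+1) && (z == x.+1) then - R j
  else Tcoef R j.

Definition weight (R : nat -> F) (p : seq nat) : F :=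
  \prod_(1 <= i < (size p).-1) wloc R p i.

End Weights.

Definition in_lev (n : nat) (p : seq nat) (i : nat) : bool :=
  (n.+1 <= nth 0%N p i)%N.

Definition is_run (n : nat) (p : seq nat) (a e : nat) : bool :=
  let L := (size p).-1 in
  [&& (a <= e)%N, (e <= L)%N,
      [forall i : 'I_L.+1, ((a <= i <= e)%N ==> in_lev n p i)],
      (a == 0%N) || ~~ in_lev n p a.-1
    & (e == L) || ~~ in_lev n p e.+1].

Definition kappa (n : nat) (p : seq nat) : nat :=
  \sum_(a < (size p).-1.+1) \sum_(e < (size p).-1.+1) is_run n p a e.

Definition beta (n : nat) (p : seq nat) : nat :=
  \sum_(a < (size p).-1.+1) \sum_(e < (size p).-1.+1)
     (is_run n p a e && (a < e)%N).

Definition kappa_tilde (M n : nat) (p : seq nat) : nat :=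
  if (n < M)%N then kappa n.+1 p else 0%N.

(* Main.v *)
Require Import Defs.
From mathcomp Require Import all_boot all_order all_algebra.
From mathcomp Require Import zify.
Import Order.TTheory GRing.Theory Num.Theory.
Local Open Scope ring_scope.

Lemma nth_big (p : seq nat) i : ((size p).-1 < i)%N -> nth 0%N p i = 0%N.
Proof. move=> h; apply: nth_default; lia. Qed.

Definition start n p a := in_lev n p a && ((a == 0%N) || ~~ in_lev n p a.-1).

Lemma run_end n (p : seq nat) d : forall a, (a + d = (size p).-1)%N -> in_lev n p a ->
  exists e, [/\ (a <= e)%N, (e <= (size p).-1)%N,
     (forall i, (a <= i <= e)%N -> in_lev n p i) &
     (e == (size p).-1) || ~~ in_lev n p e.+1].
Proof.
elim: d => [|d IH] a had ha.
  exists a; split => //; first lia.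
    by move=> i hi; have -> : i = a by lia.
  by rewrite addn0 in had; rewrite had eqxx.
case hb: (in_lev n p a.+1).
  have [e [h1 h2 h3 h4]] := IH a.+1 ltac:(lia) hb.
  exists e; split => //; first lia.
  move=> i hi; case: (i =P a) => [->//|ne]; apply: h3; lia.
exists a; split => //; first lia.
  by move=> i hi; have -> : i = a by lia.
by rewrite hb orbT.
Qed.

Lemma is_runE n p a e : is_run n p a e <->
  [/\ (a <= e)%N, (e <= (size p).-1)%N,
     (forall i, (a <= i <= e)%N -> in_lev n p i),
     (a == 0%N) || ~~ in_lev n p a.-1 &
     (e == (size p).-1) || ~~ in_lev n p e.+1].
Proof.
rewrite /is_run; split.
  case/and5P => h1 h2 /forallP h3 h4 h5; split => // i hi.
  have hi' : (i < (size p).-1.+1)%N by lia.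
  by have := h3 (Ordinal hi') => /implyP; apply.
case=> h1 h2 h3 h4 h5; apply/and5P; split => //.
by apply/forallP => i; apply/implyP => hi; apply: h3.
Qed.

Lemma run_unique n p a e0 e :
  [/\ (a <= e0)%N, (e0 <= (size p).-1)%N,
     (forall i, (a <= i <= e0)%N -> in_lev n p i) &
     (e0 == (size p).-1) || ~~ in_lev n p e0.+1] ->
  ((a == 0%N) || ~~ in_lev n p a.-1) ->
  is_run n p a e = (e == e0).
Proof.
move=> [h1 h2 h3 h4] hs; apply/idP/eqP.
  move/is_runE => [g1 g2 g3 g4 g5]; case: (ltngtP e e0) => // hlt.
    have := h3 e.+1 ltac:(lia) => hh.
    by move: g5; rewrite hh orbF; move/eqP; lia.
  have := g3 e0.+1 ltac:(lia) => hh.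
  by move: h4; rewrite hh orbF; move/eqP; lia.
by move=> ->; apply/is_runE; split.
Qed.

Lemma sum_pick L e0 (h : (e0 < L.+1)%N) (f : nat -> bool) :
  (\sum_(e < L.+1) ((e == e0 :> nat) && f e) = f e0)%N.
Proof.
rewrite (bigD1 (Ordinal h)) //= eqxx /= big1 ?addn0 // => e.
by rewrite -val_eqE /= => /negbTE ->.
Qed.

Lemma sum_run n p a : (a <= (size p).-1)%N ->
  (\sum_(e < (size p).-1.+1) is_run n p a e)%N = start n p a.
Proof.
move=> ha; case hs: (start n p a).
  move: hs => /andP [hia hb].
  have [e0 He0] := @run_end n p ((size p).-1 - a)%N a ltac:(lia) hia.
  have hlt : (e0 < (size p).-1.+1)%N by case: He0; lia.
  rewrite (eq_bigr (fun e : 'I_ _ => ((e == e0 :> nat) && true) : nat)).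
    by rewrite (@sum_pick _ e0 hlt (fun=> true)).
  by move=> e _; rewrite (@run_unique n p a e0 e He0 hb) andbT.
rewrite big1 // => e _.
case hr: (is_run n p a e) => //.
move/is_runE: hr => [g1 g2 g3 g4 g5].
by move: hs; rewrite /start g4 g3 //; lia.
Qed.

Lemma sum_runb n p a : (a <= (size p).-1)%N ->
  (\sum_(e < (size p).-1.+1) (is_run n p a e && (a < e)%N))%N
   = start n p a && in_lev n p a.+1.
Proof.
move=> ha; case hs: (start n p a).
  move: hs => /andP [hia hb].
  have [e0 He0] := @run_end n p ((size p).-1 - a)%N a ltac:(lia) hia.
  have hlt : (e0 < (size p).-1.+1)%N by case: He0; lia.
  rewrite (eq_bigr (fun e : 'I_ _ => ((e == e0 :> nat) && (a < e)%N) : nat)).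
    rewrite (@sum_pick _ e0 hlt (fun e => (a < e)%N)) /=; case: He0 => h1 h2 h3 h4.
    case: (ltngtP a e0) => hh; [|lia|].
      by rewrite h3 //; lia.
    subst e0; move: h4; case/orP => [/eqP e|/negbTE -> //].
    by rewrite /in_lev nth_big //; lia.
  by move=> e _; rewrite (@run_unique n p a e0 e He0 hb).
rewrite big1 // => e _.
case hr: (is_run n p a e) => //.
move/is_runE: hr => [g1 g2 g3 g4 g5].
by move: hs; rewrite /start g4 g3 //; lia.
Qed.

Lemma sum_inner L (f : nat -> nat) : (1 <= L)%N -> f 0%N = 0%N -> f L = 0%N ->
  (\sum_(a < L.+1) f a = \sum_(1 <= a < L) f a)%N.
Proof.
move=> hL h0 h1.
by rewrite -(big_mkord xpredT f) big_nat_recr //= big_ltn // h0 h1 add0n addn0.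
Qed.

Definition Aw n (p : seq nat) i := (nth 0%N p i == n.+1) && (nth 0%N p i.-1 == n) && (nth 0%N p i.+1 == n).
Definition Bw n (p : seq nat) i := (nth 0%N p i == n.+1) && (nth 0%N p i.-1 == n.+2) && (nth 0%N p i.+1 == n.+2).
Definition Cw n (p : seq nat) i := (nth 0%N p i == n.+1) && ~~ ((nth 0%N p i.-1 == n) && (nth 0%N p i.+1 == n))
   && ~~ ((nth 0%N p i.-1 == n.+2) && (nth 0%N p i.+1 == n.+2)).
Definition Sw n (p : seq nat) i := (nth 0%N p i.-1 == n) && (nth 0%N p i == n.+1) && (nth 0%N p i.+1 == n.+2).
Definition Ew n (p : seq nat) i := (nth 0%N p i.-1 == n.+2) && (nth 0%N p i == n.+1) && (nth 0%N p i.+1 == n).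
Definition up (c : nat) (p : seq nat) j := (nth 0%N p j == c) && (nth 0%N p j.+1 == c.+1).
Definition dn (c : nat) (p : seq nat) j := (nth 0%N p j == c.+1) && (nth 0%N p j.+1 == c).

Definition SS (p : seq nat) (f : nat -> bool) := (\sum_(1 <= i < (size p).-1) f i)%N.

Lemma wloc_prod (F : rcfType) M (R : nat -> F) p i : scattering_seq M p ->
  (1 <= i < (size p).-1)%N ->
  wloc R p i = \prod_(0 <= n < M.+1)
    (R n ^+ Aw n p i * (- R n) ^+ Bw n p i * Tcoef R n ^+ Cw n p i).
Proof.
case=> hsz h0 hL hin hadj hi.
have := hin i hi => /andP [h1 h2].
have [m hm] : exists m, nth 0%N p i = m.+1 by case: (nth 0%N p i) h1 => // m; exists m.
have hmM : (m < M.+1)%N by lia.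
rewrite big_mkord (bigD1 (Ordinal hmM)) //= big1 ?mulr1.
  rewrite /wloc /Aw /Bw /Cw hm eqxx /= -/(nth 0%N p i.-1) -/(nth 0%N p i.+1).
  case E1: ((nth 0%N p i.-1 == m) && (nth 0%N p i.+1 == m));
  case E2: ((nth 0%N p i.-1 == m.+2) && (nth 0%N p i.+1 == m.+2));
    rewrite /= ?expr1 ?expr0 ?mul1r ?mulr1 //.
  by move: E1 E2 => /andP[/eqP -> _] /andP[/eqP]; lia.
move=> n hn.
have hmn : (m == n) = false.
  apply/negbTE; apply: contra hn => /eqP e; apply/eqP/val_inj => /=; by rewrite e.
by rewrite /Aw /Bw /Cw hm eqSS hmn /= !expr0 !mulr1.
Qed.

Lemma weight_counts (F : rcfType) M (R : nat -> F) p : scattering_seq M p ->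
  weight R p = \prod_(0 <= n < M.+1)
    (R n ^+ SS p (Aw n p) * (- R n) ^+ SS p (Bw n p) * Tcoef R n ^+ SS p (Cw n p)).
Proof.
move=> hs; rewrite /weight (eq_big_nat _ _ (fun i hi => @wloc_prod F M R p i hs hi)).
rewrite exchange_big_nat /=; apply: eq_bigr => n _.
by rewrite !big_split /= !prodrXr.
Qed.

Lemma adj2 M p i : scattering_seq M p -> (1 <= i < (size p).-1)%N ->
  [/\ (nth 0%N p i == (nth 0%N p i.-1).+1) || (nth 0%N p i.-1 == (nth 0%N p i).+1),
      (nth 0%N p i.+1 == (nth 0%N p i).+1) || (nth 0%N p i == (nth 0%N p i.+1).+1) &
      (1 <= nth 0%N p i)%N].
Proof.
case=> hsz h0 hL hin hadj hi; split.
- have := hadj i.-1 ltac:(lia); rewrite prednK //; lia.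
- exact: hadj i ltac:(lia).
- by have /andP[] := hin i hi.
Qed.

Lemma kappa_count M p n : scattering_seq M p ->
  kappa n p = (SS p (Aw n p) + SS p (Sw n p))%N.
Proof.
move=> hs; have hs' := hs; case: hs' => hsz h0 hL hin hadj.
rewrite /kappa (eq_bigr (fun a : 'I_ _ => (start n p a : nat))); last first.
  by move=> a _; apply: sum_run; rewrite -ltnS.
rewrite (@sum_inner _ (fun a => (start n p a : nat))) ?/start ?/in_lev ?h0 ?hL //; last lia.
rewrite /SS -big_split /=; apply: eq_big_nat => i hi.
have [a1 a2 a3] := @adj2 M p i hs hi.
rewrite /Aw /Sw /in_lev; move: a1 a2 a3; lia.
Qed.

Lemma beta_count M p n : scattering_seq M p -> beta n p = SS p (Sw n p).
Proof.
move=> hs; have hs' := hs; case: hs' => hsz h0 hL hin hadj.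
rewrite /beta (eq_bigr (fun a : 'I_ _ => (start n p a && in_lev n p a.+1 : nat))); last first.
  by move=> a _; apply: sum_runb; rewrite -ltnS.
rewrite (@sum_inner _ (fun a => (start n p a && in_lev n p a.+1 : nat))) ?/start ?/in_lev ?h0 ?hL //; last lia.
rewrite /SS /=; apply: eq_big_nat => i hi.
have [a1 a2 a3] := @adj2 M p i hs hi.
rewrite /Sw; move: a1 a2 a3; lia.
Qed.

Lemma tele M p (c : nat) : scattering_seq M p ->
  (\sum_(j < (size p).-1) up c p j = \sum_(j < (size p).-1) dn c p j)%N.
Proof.
case=> hsz h0 hL hin hadj.
have H : forall m, (m <= (size p).-1)%N ->
  (\sum_(0 <= j < m) up c p j + (c < nth 0%N p 0)%N = \sum_(0 <= j < m) dn c p j + (c < nth 0%N p m)%N)%N.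
  elim=> [|m IH] hm; first by rewrite !big_geq.
  rewrite !big_nat_recr //=.
  have step : (up c p m + (c < nth 0%N p m) = dn c p m + (c < nth 0%N p m.+1))%N by have := hadj m ltac:(lia); rewrite /up /dn; lia.
  have := IH ltac:(lia); lia.
have := H _ (leqnn _); rewrite h0 hL /= !big_mkord !addn0; exact.
Qed.

Lemma up_count M p n : scattering_seq M p ->
  (\sum_(j < (size p).-1) up n.+1 p j = SS p (Bw n p) + SS p (Sw n p))%N.
Proof.
move=> hs; have hs' := hs; case: hs' => hsz h0 hL hin hadj.
rewrite -(big_mkord xpredT (fun j => (up n.+1 p j : nat))) big_ltn; last lia.
rewrite /up h0 /= add0n /SS -big_split /=; apply: eq_big_nat => i hi.
have [a1 a2 a3] := @adj2 M p i hs hi.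
rewrite /Bw /Sw; move: a1 a2 a3; lia.
Qed.

Lemma dn_count M p n : scattering_seq M p ->
  (\sum_(j < (size p).-1) dn n.+1 p j = SS p (Ew n p) + SS p (Bw n p))%N.
Proof.
move=> hs; have hs' := hs; case: hs' => hsz h0 hL hin hadj.
have [L' hL'] : exists L', (size p).-1 = L'.+1 by exists (size p).-2; lia.
rewrite /SS -big_split /=.
rewrite (eq_big_nat _ _ (F2 := fun i => (dn n.+1 p i.-1 : nat))); last first.
  move=> i hi; have [a1 a2 a3] := @adj2 M p i hs hi.
  rewrite /Ew /Bw /dn prednK; last lia.
  move: a1 a2 a3; lia.
rewrite hL' big_ord_recr /= big_add1 /= big_mkord.
suff -> : dn n.+1 p L' = false by rewrite addn0.
by rewrite /dn -hL' hL andbF.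
Qed.

Lemma kt_count M p n : scattering_seq M p -> (n <= M)%N ->
  kappa_tilde M n p = (\sum_(j < (size p).-1) up n.+1 p j)%N.
Proof.
move=> hs; have hs' := hs; case: hs' => hsz h0 hL hin hadj hn.
rewrite /kappa_tilde; case: ltnP => hnM.
  rewrite /kappa (eq_bigr (fun a : 'I_ _ => (start n.+1 p a : nat))); last first.
    by move=> a _; apply: sum_run; rewrite -ltnS.
  rewrite big_ord_recl /start /in_lev h0 /= add0n.
  apply: eq_bigr => a _; rewrite /bump leq0n add1n add0n.
  have := hadj a (ltn_ord a); rewrite /up; lia.
rewrite big1 // => j _; rewrite /up.
case: (ltnP j.+1 (size p).-1) => hj.
  have := hin j.+1 ltac:(lia); lia.
have -> : j.+1 = (size p).-1 by have := ltn_ord j; lia.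
by rewrite hL andbF.
Qed.

Lemma c_count M p n : scattering_seq M p ->
  SS p (Cw n p) = (SS p (Sw n p) + SS p (Ew n p))%N.
Proof.
move=> hs; rewrite /SS -big_split /=; apply: eq_big_nat => i hi.
have [a1 a2 a3] := @adj2 M p i hs hi.
rewrite /Cw /Sw /Ew; move: a1 a2 a3; lia.
Qed.

Theorem lemma1 (F : rcfType) (M : nat) (R : nat -> F) (p : seq nat) :
  (1 <= M)%N ->
  (forall n, (n <= M)%N -> -1 < R n < 1) ->
  scattering_seq M p ->
  weight R p =
  \prod_(0 <= n < M.+1)
    ((- R n) ^ ((kappa_tilde M n p)%:Z - (beta n p)%:Z)
     * R n ^ ((kappa n p)%:Z - (beta n p)%:Z)
     * Tcoef R n ^ (2 * (beta n p)%:Z)).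
Proof.
move=> _ _ hs; rewrite (@weight_counts F M R p hs); apply: eq_big_nat => n hn.
have hnM : (n <= M)%N by lia.
rewrite (@kt_count M p n hs hnM) (@up_count M p n hs) (@kappa_count M p n hs) (@beta_count M p n hs).
have hE : SS p (Ew n p) = SS p (Sw n p).
  have := @tele M p n.+1 hs; rewrite (@up_count M p n hs) (@dn_count M p n hs); lia.
rewrite (@c_count M p n hs) hE !PoszD !addrK.
have -> : 2 * (SS p (Sw n p))%:Z = (SS p (Sw n p) + SS p (Sw n p))%N%:Z.
  by rewrite PoszD -[2]/(1 + 1) mulrDl mul1r.
rewrite -!exprnP.
by rewrite [R n ^+ _ * _]mulrC.
Qed.
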